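(* Let $\nu$ be a positive continuous radial function on $\mathbb{D}$, and let $X$ be a Banach space of analytic functions on $\mathbb{D}$ in which the set of polynomials is dense. Let $\varphi, \psi$ be analytic self-maps of $\mathbb{D}$ such that $C_{\varphi} - C_{\psi} : X \to \mathcal{B}_{\nu}$ is bounded. Then the following are equivalent: (a) $C_{\varphi} - C_{\psi}$ is a bounded operator from $X$ into $\mathcal{B}_{\nu,0}$; (b) $\varphi - \psi \in \mathcal{B}_{\nu,0}$ and $\varphi^{2} - \psi^{2} \in \mathcal{B}_{\nu,0}$; (c) $\varphi - \psi \in \mathcal{B}_{\nu,0}$ and $\displaystyle\lim_{|z|\to 1^{-}} \nu(z)|\varphi(z)-\psi(z)|\max\{|\varphi'(z)|, |\psi'(z)|\} = 0$.
   Context: $\mathbb{D}$ is the open unit disk and $H(\mathbb{D})$ the analytic functions on $\mathbb{D}$. For a positive continuous radial function $\nu$ on $\mathbb{D}$ (radial: $\nu(z)=\nu(|z|)$), the Bloch type space $\mathcal{B}_{\nu}$ consists of $f\in H(\mathbb{D})$ with $\sup_{z\in\mathbb{D}}\nu(z)|f'(z)|<\infty$ (normed by $|f(0)|+\sup_{z}\nu(z)|f'(z)|$), and $\mathcal{B}_{\nu,0}$ is the closed subspace of $f\in\mathcal{B}_\nu$ with $\nu(z)|f'(z)|\to 0$ as $|z|\to1^-$. For an analytic self-map $\varphi$ of $\mathbb{D}$, $C_\varphi f = f\circ\varphi$. *)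

(* Defs.v *)
(* The complex plane is R[i] for an
   arbitrary R : realType (i.e. the complex numbers), viewed as a normed field
   over itself, so that [derivable f z 1] / [derive1 f z] are complex
   derivatives. *)
From HB Require Import structures.
From mathcomp Require Import all_boot all_order all_algebra.
From mathcomp Require Import all_classical all_reals all_analysis.
From mathcomp Require Import complex.
Import Order.TTheory GRing.Theory Num.Theory.
Import numFieldNormedType.Exports.

Set Implicit Arguments.
Unset Strict Implicit.
Unset Printing Implicit Defensive.

Local Open Scope classical_set_scope.
Local Open Scope ring_scope.

Definition Cplx (R : realType) : numClosedFieldType := R[i].

Section Defs.
Variable R : realType.
Local Notation C := (Cplx R).

Definition disk : set C := [set z : C | `|z| < 1].

Definition holo (f : C -> C) : Prop := forall z : C, `|z| < 1 -> derivable f z 1.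

Definition self_map (phi : C -> C) : Prop :=
  holo phi /\ forall z : C, `|z| < 1 -> `|phi z| < 1.

Definition weight (nu : C -> C) : Prop :=
  [/\ forall z : C, `|z| < 1 -> 0 < nu z,
      {within disk, continuous nu} &
      forall z : C, `|z| < 1 -> nu z = nu `|z| ].

Definition vanishes_at_boundary (F : C -> C) : Prop :=
  forall e : C, 0 < e -> exists r : C, r < 1 /\
    forall z : C, r < `|z| < 1 -> `|F z| < e.

Definition bloch (nu : C -> C) (f : C -> C) : Prop :=
  holo f /\ exists M : C, forall z : C, `|z| < 1 -> nu z * `|derive1 f z| <= M.

Definition little_bloch (nu : C -> C) (f : C -> C) : Prop :=
  bloch nu f /\ vanishes_at_boundary (fun z => nu z * `|derive1 f z|).

(* ||f||_{B_nu} = |f(0)| + sup_{z in D} nu(z)|f'(z)| <= c  (exact unfolding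
   of "the sup is <= c - |f 0|") *)
Definition bloch_norm_le (nu : C -> C) (f : C -> C) (c : C) : Prop :=
  forall z : C, `|z| < 1 -> `|f 0| + nu z * `|derive1 f z| <= c.

(* X is a Banach space of analytic functions on D: a complete normed C-space V
   together with a linear injective realisation J of its elements as analytic
   functions on D. *)
Definition banach_space_of_analytic (V : completeNormedModType C)
    (J : V -> C -> C) : Prop :=
  [/\ forall (a : C) (u v : V) (z : C), J (a *: u + v) z = a * J u z + J v z,
      forall (u v : V), (forall z : C, `|z| < 1 -> J u z = J v z) -> u = v &
      forall v : V, holo (J v) ].

Definition is_poly_in (V : completeNormedModType C) (J : V -> C -> C)
    (w : V) (p : {poly C}) : Prop :=
  forall z : C, `|z| < 1 -> J w z = p.[z].

Definition polys_dense (V : completeNormedModType C) (J : V -> C -> C) : Prop :=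
  (forall p : {poly C}, exists w : V, is_poly_in J w p) /\
  (forall (v : V) (e : C), 0 < e ->
     exists (p : {poly C}) (w : V), is_poly_in J w p /\ `|v - w| < e).

Definition cdiff (V : completeNormedModType C) (J : V -> C -> C)
    (phi psi : C -> C) (v : V) : C -> C :=
  fun z => J v (phi z) - J v (psi z).

Definition bounded_into_bloch (nu : C -> C) (V : completeNormedModType C)
    (T : V -> C -> C) : Prop :=
  (forall v : V, bloch nu (T v)) /\
  exists M : C, forall v : V, bloch_norm_le nu (T v) (M * `|v|).

Definition bounded_into_little_bloch (nu : C -> C) (V : completeNormedModType C)
    (T : V -> C -> C) : Prop :=
  (forall v : V, little_bloch nu (T v)) /\
  exists M : C, forall v : V, bloch_norm_le nu (T v) (M * `|v|).

End Defs.

(* Main.v *)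
Require Import Defs.
From HB Require Import structures.
From mathcomp Require Import all_boot all_order all_algebra.
From mathcomp Require Import all_classical all_reals all_analysis.
From mathcomp Require Import complex.
From mathcomp Require Import ring.
Import Order.TTheory GRing.Theory Num.Theory.
Import numFieldNormedType.Exports.
Local Open Scope classical_set_scope.
Local Open Scope ring_scope.

Section S.
Variable R : realType.
Local Notation C := (Cplx R).

Lemma near_disk (z : C) : `|z| < 1 -> \forall x \near z, `|x| < 1.
Proof.
move=> hz.
have e0 : 0 < 1 - `|z| by rewrite subr_gt0.
apply: filterS (nbhsx_ballx z _ e0) => x.
rewrite -ball_normE /ball_ /= => h.
have := ler_normD z (x - z); rewrite addrC subrK => h2.
apply: le_lt_trans h2 _.
by rewrite -ltrBrDl -normrN opprB.
Qed.

Lemma agree_deriv (f g : C -> C) (z : C) : `|z| < 1 ->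
  (forall x, `|x| < 1 -> f x = g x) ->
  derivable f z 1 -> derivable g z 1 /\ derive1 f z = derive1 g z.
Proof.
move=> hz fg df.
have hn : \forall x \near z, f x = g x.
  near=> x. apply: fg. near: x. exact: near_disk.
split; first exact: near_eq_derivable df.
by rewrite !derive1E; apply: near_eq_derive.
Unshelve. all: by end_near.
Qed.

Lemma poly_bound (p : {poly C}) : exists K : C, 0 <= K /\
  forall a b : C, `|a| <= 1 -> `|b| <= 1 ->
    `|p.[a]| <= K /\ `|p.[a] - p.[b]| <= K * `|a - b|.
Proof.
elim/poly_ind: p => [|p c [K [K0 hK]]].
  exists 0; split => // a b _ _; by rewrite !horner0 subr0 normr0 mul0r.
exists (K + K + `|c|); split.
  by rewrite addr_ge0 ?addr_ge0.
move=> a b ha hb; have [h1 h2] := hK a b ha hb; have [h3 _] := hK b a hb ha.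
rewrite !hornerE; split.
  apply: le_trans (ler_normD _ _) _; rewrite lerD2r normrM.
  have hh : `|p.[a]| * `|a| <= K by rewrite -[K]mulr1; apply: ler_pM.
  by apply: le_trans hh _; rewrite lerDl.
have -> : p.[a] * a + c - (p.[b] * b + c) = p.[a] * (a - b) + (p.[a] - p.[b]) * b.
  ring.
apply: le_trans (ler_normD _ _) _; rewrite !normrM.
have hd : 0 <= `|a - b| by [].
apply: (@le_trans _ _ (K * `|a - b| + K * `|a - b|)).
  apply: lerD; first by apply: ler_pM.
  by rewrite -[X in _ <= X]mulr1; apply: ler_pM.
rewrite !mulrDl lerDl; exact: mulr_ge0.
Qed.

Lemma lt1_real (r : C) : r < 1 -> r \is Num.real.
Proof.
move=> h; have : 0 < 1 - r by rewrite subr_gt0.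
move=> /gtr0_real h2; rewrite -[r]opprK -[- r](addKr 1).
by rewrite rpredN rpredD // ?rpredN // rpred1.
Qed.

Lemma vab_le (F G : C -> C) : vanishes_at_boundary G ->
  (forall z, `|z| < 1 -> `|F z| <= `|G z|) -> vanishes_at_boundary F.
Proof.
move=> hG hFG e e0; have [r [r1 hr]] := hG e e0; exists r; split => //.
move=> z /andP[rz z1]; apply: le_lt_trans (hFG z z1) _; apply: hr.
by rewrite rz z1.
Qed.

Lemma vab_add (F G : C -> C) : vanishes_at_boundary F -> vanishes_at_boundary G ->
  vanishes_at_boundary (fun z => F z + G z).
Proof.
move=> hF hG e e0.
have e2 : 0 < e / 2 by rewrite divr_gt0 // ltr0n.
have [r1 [r11 h1]] := hF _ e2; have [r2 [r21 h2]] := hG _ e2.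
have key : forall r, r < 1 -> r1 <= r -> r2 <= r -> exists r : C, r < 1 /\
    forall z, r < `|z| < 1 -> `|F z + G z| < e.
  move=> r r1' le1 le2; exists r; split => // z /andP[rz z1].
  apply: le_lt_trans (ler_normD _ _) _; rewrite [e]splitr; apply: ltrD.
    by apply: h1; rewrite z1 (le_lt_trans le1 rz).
  by apply: h2; rewrite z1 (le_lt_trans le2 rz).
have := real_leVge (lt1_real r1 r11) (lt1_real r2 r21); case/orP => h.
  by apply: (key r2).
by apply: (key r1).
Qed.

Lemma vab_scale (k : C) (F : C -> C) : vanishes_at_boundary F ->
  vanishes_at_boundary (fun z => k * F z).
Proof.
move=> hF e e0.
have k1 : 0 < `|k| + 1 by rewrite ltr_pwDr.
have [r [r1 hr]] := hF (e / (`|k| + 1)) (divr_gt0 e0 k1).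
exists r; split => // z hz; rewrite normrM.
apply: (@le_lt_trans _ _ ((`|k| + 1) * `|F z|)).
  by apply: ler_wpM2r => //; rewrite lerDl.
have h := hr z hz; rewrite -(ltr_pM2l k1) mulrCA divff ?mulr1 in h => //.
Qed.

Lemma max_le_sum (x y : C) : 0 <= x -> 0 <= y -> Num.max x y <= x + y.
Proof.
move=> x0 y0.
rewrite (comparable_ge_max _ (real_comparable (ger0_real x0) (ger0_real y0))).
by rewrite lerDl y0 lerDr x0.
Qed.

Lemma le_max_r (x y : C) : 0 <= x -> 0 <= y -> y <= Num.max x y.
Proof.
move=> x0 y0.
by rewrite (comparable_le_max _ (real_comparable (ger0_real x0) (ger0_real y0))) lexx orbT.
Qed.

Lemma max_ge0 (x y : C) : 0 <= x -> 0 <= y -> 0 <= Num.max x y.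
Proof. by move=> x0 y0; apply: (le_trans y0); apply: le_max_r. Qed.

Lemma ineq_ca (n a b a1 b1 K qa qb : C) : 0 < n -> 0 <= K ->
  `|qa| <= K -> `|qa - qb| <= K * `|a - b| ->
  `|n * `|qa * a1 - qb * b1| | <=
  `|K * (n * `|a1 - b1|) + K * (n * `|a - b| * Num.max `|a1| `|b1|)|.
Proof.
move=> n0 K0 h1 h2.
have n0' : 0 <= n by apply: ltW.
have mx0 := @max_ge0 _ _ (normr_ge0 a1) (normr_ge0 b1).
have e1 : `|n * `|qa * a1 - qb * b1| | = n * `|qa * a1 - qb * b1|.
  by apply: ger0_norm; apply: mulr_ge0.
have e2 : `|K * (n * `|a1 - b1|) + K * (n * `|a - b| * Num.max `|a1| `|b1|)| =
   K * (n * `|a1 - b1|) + K * (n * `|a - b| * Num.max `|a1| `|b1|).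
  by apply: ger0_norm; repeat (apply: addr_ge0 || apply: mulr_ge0 || apply: normr_ge0).
rewrite e1 e2.
rewrite (_ : K * _ + K * _ = n * (K * `|a1 - b1| + K * (`|a - b| * Num.max `|a1| `|b1|))); last by ring.
apply: ler_wpM2l => //.
have -> : qa * a1 - qb * b1 = qa * (a1 - b1) + (qa - qb) * b1 by ring.
apply: le_trans (ler_normD _ _) _; rewrite !normrM; apply: lerD.
  by apply: ler_wpM2r.
rewrite mulrA; apply: ler_pM => //.
exact: le_max_r.
Qed.

Lemma ineq_bc (n a b a1 b1 : C) : 0 < n -> `|a| < 1 -> `|b| < 1 ->
  `|n * `|a - b| * Num.max `|a1| `|b1| | <=
  `|n * `|a *+ 2 * a1 - b *+ 2 * b1| + 4 * (n * `|a1 - b1|)|.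
Proof.
move=> n0 ha hb.
have n0' : 0 <= n by apply: ltW.
have mx0 := @max_ge0 _ _ (normr_ge0 a1) (normr_ge0 b1).
have e1 : `|n * `|a - b| * Num.max `|a1| `|b1| | = n * `|a - b| * Num.max `|a1| `|b1|.
  by apply: ger0_norm; repeat (apply: mulr_ge0 || apply: normr_ge0).
have e2 : `|n * `|a *+ 2 * a1 - b *+ 2 * b1| + 4 * (n * `|a1 - b1|)| =
  n * `|a *+ 2 * a1 - b *+ 2 * b1| + 4 * (n * `|a1 - b1|).
  by apply: ger0_norm; repeat (apply: addr_ge0 || apply: mulr_ge0 || apply: normr_ge0).
rewrite e1 e2.
rewrite (_ : n * _ + 4 * _ = n * (`|a *+ 2 * a1 - b *+ 2 * b1| + 4 * `|a1 - b1|)); last by ring.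
rewrite -mulrA; apply: ler_wpM2l => //.
set s := `|a - b|; set A := a * a1 - b * b1; set B := a1 - b1.
have s2 : s <= 2.
  apply: le_trans (ler_normB _ _) _.
  by apply: le_trans (lerD (ltW ha) (ltW hb)) _; rewrite -mulr2n.
have st1 : s * `|b1| <= `|A| + `|B|.
  have -> : s * `|b1| = `|A - a * B| by rewrite /s -normrM; congr `|_|; rewrite /A /B; ring.
  apply: le_trans (ler_normB _ _) _; rewrite lerD2l normrM.
  by rewrite -[X in _ <= X]mul1r; apply: ler_wpM2r => //; apply: ltW.
have st2 : s * `|a1| <= s * `|b1| + 2 * `|B|.
  have -> : s * `|a1| = `|(a - b) * b1 + (a - b) * B| by rewrite /s -normrM; congr `|_|; rewrite /B; ring.
  apply: le_trans (ler_normD _ _) _; rewrite !normrM lerD2l.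
  by apply: ler_wpM2r.
have -> : a *+ 2 * a1 - b *+ 2 * b1 = 2 * A by rewrite /A; ring.
rewrite normrM (ger0_norm (_ : 0 <= 2)) //.
apply: (@le_trans _ _ (s * (`|a1| + `|b1|))).
  by apply: ler_wpM2l; [exact: normr_ge0 | apply: max_le_sum].
rewrite mulrDr.
apply: le_trans (lerD st2 (lexx (s * `|b1|))) _.
apply: (@le_trans _ _ ((`|A| + `|B|) + 2 * `|B| + (`|A| + `|B|))).
  by apply: lerD => //; apply: lerD.
rewrite le_eqVlt; apply/orP; left; apply/eqP; ring.
Qed.

Lemma lb_transfer (nu f g : C -> C) : little_bloch nu f ->
  (forall z, `|z| < 1 -> f z = g z) -> little_bloch nu g.
Proof.
move=> [[hf [M hM]] hv] fg.
have D z : `|z| < 1 -> derivable g z 1 /\ derive1 f z = derive1 g z.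
  by move=> hz; apply: agree_deriv => //; apply: hf.
split; [split|].
- by move=> z hz; exact: (D z hz).1.
- by exists M => z hz; rewrite -(D z hz).2; apply: hM.
- by apply: vab_le hv _ => z hz; rewrite (D z hz).2.
Qed.

Lemma cdiff_poly (V : completeNormedModType C) (J : V -> C -> C) phi psi w p :
  self_map phi -> self_map psi -> is_poly_in J w p ->
  forall z, `|z| < 1 -> cdiff J phi psi w z = p.[phi z] - p.[psi z].
Proof.
move=> [_ h1] [_ h2] hw z hz; rewrite /cdiff !hw //; [exact: h2 | exact: h1].
Qed.

Lemma derB (phi psi : C -> C) z : derivable phi z 1 -> derivable psi z 1 ->
  derive1 (fun z => phi z - psi z) z = derive1 phi z - derive1 psi z.
Proof. by move=> d1 d2; rewrite derive1E (deriveB d1 d2) -!derive1E. Qed.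

Lemma poly_comp_deriv (p : {poly C}) (f : C -> C) (z : C) :
  derivable f z 1 -> derivable (fun x => p.[f x]) z 1 /\
  derive1 (fun x => p.[f x]) z = p^`().[f z] * derive1 f z.
Proof.
move=> df; elim/poly_ind: p => [|p c [ih1 ih2]].
  rewrite (_ : (fun x => _) = cst 0); last by apply/funext => x; rewrite horner0.
  split; first exact: derivable_cst.
  by rewrite derive1E derive_cst deriv0 horner0 mul0r.
rewrite (_ : (fun x => _) = (fun x => p.[f x]) * f + cst c); last first.
  by apply/funext => x; rewrite !hornerE.
split.
  have h1 := derivableM ih1 df.
  have h2 := derivableD h1 (derivable_cst c z 1).
  exact: h2.
have h1 := derivableM ih1 df.
rewrite derive1E (deriveD h1 (derivable_cst c z 1)) (deriveM ih1 df) derive_cst.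
rewrite -!derive1E ih2 derivMXaddC !hornerE /=.
rewrite -[p.[f z] *: _]/(p.[f z] * _) -[f z *: _]/(f z * _).
by rewrite mulrDl mulrA (mulrC (f z)).
Qed.

End S.

Arguments near_disk {R}. Arguments agree_deriv {R}. Arguments poly_bound {R}. Arguments lt1_real {R}. Arguments vab_le {R}. Arguments vab_add {R}. Arguments vab_scale {R}. Arguments max_le_sum {R}. Arguments le_max_r {R}. Arguments max_ge0 {R}. Arguments ineq_ca {R}. Arguments ineq_bc {R}. Arguments lb_transfer {R}. Arguments cdiff_poly {R}. Arguments derB {R}. Arguments poly_comp_deriv {R}.

Theorem theorem3p1 (R : realType) (nu : Cplx R -> Cplx R)
  (V : completeNormedModType (Cplx R)) (J : V -> Cplx R -> Cplx R)
  (phi psi : Cplx R -> Cplx R) :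
  weight nu ->
  banach_space_of_analytic J ->
  polys_dense J ->
  self_map phi -> self_map psi ->
  bounded_into_bloch nu (cdiff J phi psi) ->
  [<-> bounded_into_little_bloch nu (cdiff J phi psi);
       little_bloch nu (fun z => phi z - psi z) /\
       little_bloch nu (fun z => phi z ^+ 2 - psi z ^+ 2);
       little_bloch nu (fun z => phi z - psi z) /\
       vanishes_at_boundary (fun z => nu z * `|phi z - psi z| *
          Num.max `|derive1 phi z| `|derive1 psi z|)].
Proof.
move=> hnu hJ hP hphi hpsi hT.
have [hphiH phi1] := hphi; have [hpsiH psi1] := hpsi.
have [hpos _ _] := hnu.
tfae.
- move=> [ha _].
  have [w1 hw1] := hP.1 'X; have [w2 hw2] := hP.1 ('X^2).
  split.
    apply: lb_transfer (ha w1) _ => z hz.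
    by rewrite (cdiff_poly _ _ _ _ _ _ hphi hpsi hw1 z hz) !hornerX.
  apply: lb_transfer (ha w2) _ => z hz.
  by rewrite (cdiff_poly _ _ _ _ _ _ hphi hpsi hw2 z hz) !hornerXn.
- move=> [h1 h2]; split => //.
  have [_ v2] := h2; have [_ v1] := h1.
  apply: vab_le (vab_add _ _ v2 (vab_scale 4 _ v1)) _ => z hz.
  have dphi := hphiH z hz; have dpsi := hpsiH z hz.
  have [p1 q1] := poly_comp_deriv ('X^2) _ _ dphi.
  have [p2 q2] := poly_comp_deriv ('X^2) _ _ dpsi.
  have E2 : derive1 (fun z => phi z ^+ 2 - psi z ^+ 2) z =
      phi z *+ 2 * derive1 phi z - psi z *+ 2 * derive1 psi z.
    rewrite (_ : (fun z => phi z ^+ 2 - psi z ^+ 2) =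
       (fun x => ('X^2).[phi x]) - (fun x => ('X^2).[psi x])); last first.
      by apply/funext => x; rewrite !fctE !hornerXn.
    rewrite derive1E (deriveB p1 p2) -!derive1E q1 q2 derivXn /=.
    by rewrite !hornerMn expr1 !hornerX.
  rewrite /= E2 (derB _ _ _ dphi dpsi).
  by apply: ineq_bc; [apply: hpos | apply: phi1 | apply: psi1].
- move=> [h1 h3]; split; last exact: hT.2.
  set T := cdiff J phi psi.
  have [_ v1] := h1.
  have Hpoly : forall w p, is_poly_in J w p ->
      vanishes_at_boundary (fun z => nu z * `|derive1 (T w) z|).
    move=> w p hw; have [K [K0 hK]] := poly_bound p^`().
    apply: vab_le (vab_add _ _ (vab_scale K _ v1) (vab_scale K _ h3)) _ => z hz.
    have dphi := hphiH z hz; have dpsi := hpsiH z hz.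
    have [p1 q1] := poly_comp_deriv p _ _ dphi.
    have [p2 q2] := poly_comp_deriv p _ _ dpsi.
    have dd := derivableB p1 p2.
    have [_ E] := agree_deriv _ _ z hz
      (fun x hx => esym (cdiff_poly _ _ _ _ _ _ hphi hpsi hw x hx)) dd.
    rewrite /= -E derive1E (deriveB p1 p2) -!derive1E q1 q2 (derB _ _ _ dphi dpsi).
    have [hK1 hK2] := hK (phi z) (psi z) (ltW (phi1 z hz)) (ltW (psi1 z hz)).
    by apply: ineq_ca => //; apply: hpos.
  move=> v; split; first exact: hT.1 v.
  have [M hM] := hT.2.
  have [hlin _ _] := hJ.
  move=> e e0.
  have e2 : 0 < e / 2 by rewrite divr_gt0 // ltr0n.
  set M' := `|M| + 1.
  have M'0 : 0 < M' by rewrite ltr_pwDr.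
  have [p [w [hw hvw]]] := hP.2 v (e / 2 / M') (divr_gt0 e2 M'0).
  have [r [r1 hr]] := Hpoly w p hw (e / 2) e2.
  exists r; split => // z hz.
  have z1 : `|z| < 1 by case/andP: hz.
  have lin : T v = T (v - w) + T w.
    apply/funext => x; rewrite fctE /T /cdiff.
    have -> : v - w = (-1) *: w + v by rewrite scaleN1r addrC.
    rewrite !hlin; ring.
  have d1 := (hT.1 (v - w)).1 z z1.
  have d2 := (hT.1 w).1 z z1.
  have ED : derive1 (T v) z = derive1 (T (v - w)) z + derive1 (T w) z.
    by rewrite lin derive1E (deriveD d1 d2) -!derive1E.
  have n0 := hpos z z1.
  have B1 : nu z * `|derive1 (T (v - w)) z| < e / 2.
    have hb := hM (v - w) z z1.
    have h0 : 0 <= M * `|v - w|.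
      apply: le_trans hb; apply: addr_ge0 => //; apply: mulr_ge0 => //; exact: ltW.
    apply: (@le_lt_trans _ _ (M * `|v - w|)).
      by apply: le_trans hb; rewrite lerDr.
    rewrite -(ger0_norm h0) normrM normr_id.
    apply: (@le_lt_trans _ _ (M' * `|v - w|)).
      by apply: ler_wpM2r => //; rewrite /M' lerDl.
    by rewrite -(ltr_pM2l M'0) mulrCA divff ?mulr1 // in hvw; rewrite gt_eqF.
  have B2 : nu z * `|derive1 (T w) z| < e / 2.
    have hh := hr z hz.
    have e1 : `|nu z * `|derive1 (T w) z| | = nu z * `|derive1 (T w) z|.
      by apply: ger0_norm; apply: mulr_ge0 => //; exact: ltW.
    by rewrite e1 in hh.
  have e3 : `|nu z * `|derive1 (T v) z| | = nu z * `|derive1 (T v) z|.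
    by apply: ger0_norm; apply: mulr_ge0 => //; exact: ltW.
  rewrite e3 ED.
  apply: (@le_lt_trans _ _ (nu z * `|derive1 (T (v - w)) z| + nu z * `|derive1 (T w) z|)).
    rewrite -mulrDr; apply: ler_wpM2l; first exact: ltW.
    exact: ler_normD.
  rewrite [e]splitr; exact: ltrD B1 B2.
Qed.
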